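(* Let $X_0, X_1, X_2$ be three observables in a general physical theory with a set of states $\mathcal{S}$. Assume there is a finite set $\lambda(X)\subset\mathbb{R}$ (the spectrum) such that for every state $s\in\mathcal{S}$ and every $k\in\{0,1,2\}$, measuring $X_k$ on $s$ yields an outcome distributed according to a probability distribution $\Pr(X_k=\cdot\,|\,s)$ supported on $\lambda(X)$, and that every element of $\lambda(X)$ is a possible outcome of some $X_k$. Write $\langle X_k\rangle_s=\sum_{a\in\lambda(X)} a\Pr(X_k=a|s)$. Assume (M): for every state $s\in\mathcal{S}$, $\sum_{k=0}^2\langle X_k\rangle_s=0$. For a state $s$, define $$P_3\coloneqq\frac13\sum_{k=0}^2\Big(\Pr(X_k>0\,|\,s)+\tfrac12\Pr(X_k=0\,|\,s)\Big).$$ Let $x_+\coloneqq\min\{x\in\lambda(X):x>0\}$ and $-x_-\coloneqq\min\{x\in\lambda(X):x<0\}$ (each undefined if the corresponding set is empty). Then for every state $s$, $$P_3\le \mathbf{P}_3^G\coloneqq\begin{cases}\big(1+x_+/x_-\big)^{-1} & \text{if } \lambda(X) \text{ contains both positive and negative values and } \big(x_+<x_- \text{ or } 0\notin\lambda(X)\big),\\ 1/2 & \text{otherwise.}\end{cases}$$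
   Context: ''General theory'' means only that each observable, measured on a state, produces real outcomes with well-defined probabilities; no further structure is assumed beyond the hypotheses stated. The convention $\Theta(0)=1/2$ for the Heaviside step function is what gives the weight $1/2$ to the outcome $0$ in $P_3$. In the paper's convention, when the spectrum is nonnegative or nonpositive one of $x_\pm$ is undefined and the bound is $1/2$. *)

(* Defs.v *)
From HB Require Import structures.
From mathcomp Require Import all_boot all_order all_algebra.
Set Implicit Arguments. Unset Strict Implicit. Unset Printing Implicit Defensive.
Import Order.TTheory GRing.Theory Num.Theory.
Local Open Scope ring_scope.

Section Defs.
Variable R : realFieldType.

(* positive / negative parts of the spectrum (given as a duplicate-free list) *)
Definition posL (L : seq R) := [seq x <- L | 0 < x].
Definition negL (L : seq R) := [seq x <- L | x < 0].

(* x_+ := min { x in L | x > 0 }  (meaningful only when posL L is nonempty) *)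
Definition xplus (L : seq R) : R :=
  \big[Num.min/head 0 (posL L)]_(x <- posL L) x.

(* x_- := - min { x in L | x < 0 }  (meaningful only when negL L is nonempty) *)
Definition xminus (L : seq R) : R :=
  - \big[Num.min/head 0 (negL L)]_(x <- negL L) x.

Definition P3G (L : seq R) : R :=
  if [&& has (fun x => 0 < x) L, has (fun x => x < 0) L &
        (xplus L < xminus L) || (0 \notin L)]
  then (1 + xplus L / xminus L)^-1
  else 1 / 2.

(* p k a = Pr(X_k = a | s) for a fixed state s *)
Definition expect (L : seq R) (p : 'I_3 -> R -> R) (k : 'I_3) : R :=
  \sum_(a <- L) a * p k a.

Definition P3 (L : seq R) (p : 'I_3 -> R -> R) : R :=
  3^-1 * \sum_(k < 3)
    ((\sum_(a <- L | 0 < a) p k a) + 2^-1 * p k 0).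

End Defs.

(* Main.v *)
Require Import Defs.
From HB Require Import structures.
From mathcomp Require Import ring lra.
From mathcomp Require Import all_boot all_order all_algebra.
Import Order.TTheory GRing.Theory Num.Theory.
Local Open Scope ring_scope.

Definition fw {R : realFieldType} (a : R) : R :=
  if 0 < a then 1 else if a == 0 then 2^-1 else 0.

Lemma key (R : realFieldType) (L : seq R) (p : R -> R) (c d : R) :
  uniq L -> (forall a, a \notin L -> p a = 0) -> (forall a, 0 <= p a) ->
  \sum_(a <- L) p a = 1 -> (forall a, a \in L -> fw a <= c + d * a) ->
  \sum_(a <- L | 0 < a) p a + 2^-1 * p 0 <= c + d * \sum_(a <- L) a * p a.
Proof.
move=> HL Hs Hn H1 Hf.
have p0 : p 0 = \sum_(a <- L | a == 0) p a.
  rewrite (eq_bigr (fun _ => p 0)); last by move=> a /eqP ->.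
  rewrite big_const_seq.
  have -> : count (fun a => a == 0) L = (0 \in L) by exact: (count_uniq_mem 0 HL).
  case: (boolP (0 \in L)) => H0 /=; first by rewrite addr0.
  by rewrite Hs.
have -> : c + d * \sum_(a <- L) a * p a = \sum_(a <- L) (c + d * a) * p a.
  rewrite [RHS](eq_bigr (fun a => c * p a + d * (a * p a))); last first.
    by move=> a _; rewrite mulrDl mulrA.
  by rewrite big_split /= -!mulr_sumr H1 mulr1.
rewrite p0 big_mkcond [X in _ + _ * X]big_mkcond /= mulr_sumr -big_split /=.
rewrite big_seq [X in _ <= X]big_seq; apply: ler_sum => a aL.
apply: le_trans (ler_wpM2r (Hn a) (Hf a aL)).
rewrite /fw; case: ifP => Ha.
  by rewrite (gt_eqF Ha) mulr0 addr0 mul1r.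
case: ifP => Ha0; first by rewrite add0r.
by rewrite mulr0 addr0 mul0r.
Qed.

Lemma minseq_le (R : realFieldType) (s : seq R) x0 a :
  a \in s -> \big[Num.min/x0]_(x <- s) x <= a.
Proof.
elim: s => [|y s IH] //; rewrite in_cons big_cons => /orP [/eqP ->|H].
  by rewrite ge_min lexx.
by rewrite ge_min (IH H) orbT.
Qed.

Lemma minseq_P (R : realFieldType) (P : R -> bool) (s : seq R) x0 :
  P x0 -> all P s -> P (\big[Num.min/x0]_(x <- s) x).
Proof.
move=> H0 /allP Hs; rewrite big_seq; apply: (big_ind P) => //.
  by move=> x y Hx Hy; rewrite /Num.min; case: ifP.
Qed.

Lemma xplus_pos {R : realFieldType} {L : seq R} : has (fun x => 0 < x) L -> 0 < xplus L.
Proof.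
move=> H; rewrite /xplus; apply: (@minseq_P R (fun x => 0 < x) (posL L) (head 0 (posL L))).
  case E: (posL L) => [|y t] /=.
    by move: H; rewrite has_filter -/(posL L) E.
  have : y \in posL L by rewrite E mem_head.
  by rewrite mem_filter => /andP [].
by apply/allP => x; rewrite mem_filter => /andP [].
Qed.

Lemma xplus_le {R : realFieldType} {L : seq R} a : a \in L -> 0 < a -> xplus L <= a.
Proof. by move=> aL Ha; apply: minseq_le; rewrite mem_filter Ha aL. Qed.

Lemma xminus_pos {R : realFieldType} {L : seq R} : has (fun x => x < 0) L -> 0 < xminus L.
Proof.
move=> H; rewrite /xminus oppr_gt0; apply: (@minseq_P R (fun x => x < 0) (negL L) (head 0 (negL L))).
  case E: (negL L) => [|y t] /=.
    by move: H; rewrite has_filter -/(negL L) E.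
  have : y \in negL L by rewrite E mem_head.
  by rewrite mem_filter => /andP [].
by apply/allP => x; rewrite mem_filter => /andP [].
Qed.

Lemma xminus_le {R : realFieldType} {L : seq R} a : a \in L -> a < 0 -> - xminus L <= a.
Proof. by move=> aL Ha; rewrite /xminus opprK; apply: minseq_le; rewrite mem_filter Ha aL. Qed.

Theorem mainTheorem1 (R : realFieldType) (S : Type) (L : seq R)
    (Pr : S -> 'I_3 -> R -> R)
    (HL : uniq L)
    (Hnn : forall s k a, 0 <= Pr s k a)
    (Hsupp : forall s k a, a \notin L -> Pr s k a = 0)
    (Hsum : forall s k, \sum_(a <- L) Pr s k a = 1)
    (Hposs : forall a, a \in L -> exists s k, 0 < Pr s k a)
    (HM : forall s, \sum_(k < 3) expect L (Pr s) k = 0) :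
  forall s : S, P3 L (Pr s) <= P3G L.
Proof.
move=> s.
suff [c [d [Hc Hf]]] : exists c d, c <= P3G L /\ (forall a, a \in L -> fw a <= c + d * a).
  have H : \sum_(k < 3) ((\sum_(a <- L | 0 < a) Pr s k a) + 2^-1 * Pr s k 0)
        <= \sum_(k < 3) (c + d * expect L (Pr s) k).
    apply: ler_sum => k _; rewrite /expect; exact: (@key R L (Pr s k) c d HL (Hsupp s k) (Hnn s k) (Hsum s k) Hf).
  have E2 : \sum_(k < 3) (c + d * expect L (Pr s) k) = c *+ 3.
    by rewrite big_split /= -mulr_sumr HM mulr0 addr0 sumr_const card_ord.
  rewrite E2 in H.
  apply: le_trans Hc; rewrite /P3.
  have : 3^-1 * (c *+ 3) = c :> R by rewrite -mulr_natr; field.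
  move=> E; rewrite -[X in _ <= X]E; apply: ler_wpM2l => //.
  by rewrite invr_ge0.
rewrite /P3G; case: ifP => Hc.
  move/and3P: Hc => [hp hn H3].
  have xp0 := xplus_pos hp; have xm0 := xminus_pos hn.
  set xp := xplus L in xp0 H3 *; set xm := xminus L in xm0 H3 *.
  set t := xp / xm.
  have t0 : 0 < t by rewrite divr_gt0.
  set u := (1 + t)^-1.
  have u1 : u * (1 + t) = 1 by rewrite mulVf // gt_eqF // ltr_wpDr // ltW.
  have u0 : 0 < u by rewrite invr_gt0 ltr_wpDr // ltW.
  exists u, (u / xm); split => // a aL.
  have av : a / xm * xm = a by rewrite divfK // gt_eqF.
  rewrite -mulrA -(mulrC a) /fw; case: ifP => Ha.
    have : t <= a / xm by rewrite ler_pdivlMr // divfK ?gt_eqF // xplus_le.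
    move=> *; nra.
  case: ifP => Ha0.
    move/eqP: Ha0 => Ha0; subst a.
    case/orP: H3 => H3; last by rewrite aL in H3.
    have : t < 1 by rewrite ltr_pdivrMr // mul1r.
    move=> *; rewrite mul0r mulr0 addr0; nra.
  have Hn : a < 0 by rewrite lt_neqAle Ha0 /= leNgt Ha.
  have : -1 <= a / xm by rewrite ler_pdivlMr // mulN1r xminus_le.
  move=> *; nra.
case hp: (has (fun x => 0 < x) L).
  have xp0 := xplus_pos hp.
  exists (1/2), (2^-1 / xplus L); split => // a aL.
  rewrite -mulrA -(mulrC a) /fw; case: ifP => Ha.
    have : 1 <= a / xplus L by rewrite ler_pdivlMr // mul1r xplus_le.
    move=> *; nra.
  case: ifP => Ha0.
    by move/eqP: Ha0 => ->; rewrite mul0r mulr0 addr0 mul1r.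
  have Hn : a < 0 by rewrite lt_neqAle Ha0 /= leNgt Ha.
  have hn : has (fun x => x < 0) L by apply/hasP; exists a.
  move: Hc; rewrite hp hn /= => /negbT; rewrite negb_or negbK -leNgt => /andP [H1 _].
  have : -1 <= a / xplus L.
    rewrite ler_pdivlMr // mulN1r; have h := xminus_le _ aL Hn; lra.
  move=> *; nra.
exists (1/2), 0; split => // a aL.
rewrite mul0r addr0 /fw; case: ifP => Ha.
  by move: hp => /negbT /hasPn /(_ a aL); rewrite Ha.
case: ifP => _; first by rewrite mul1r.
lra.
Qed.
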